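(* Fix simple objects $j,k$ of $\mathcal{C}$. For each simple $i$ with $(i,j,k)$ admissible and each admissible $(a,i,b)$, put $$u^{ab}_i=\sum_pF^{ajk}_{b;ip}\;v^{ap}_j\otimes v^{pb}_k\ \in V_j\otimes V_k .$$ Then the subspace of $V_j\otimes V_k$ spanned by the $u^{ab}_i$ (for fixed $i$) is an $H_\mathcal{C}$-submodule isomorphic to $V_i$ via $v^{ab}_i\mapsto u^{ab}_i$, and $$V_j\otimes V_k\cong\bigoplus_{i:\,(i,j,k)\text{ admissible}}V_i .$$
   Context: $\mathcal{C}$ is a unitary fusion category, multiplicity free, whose simple objects are self-dual with trivial Frobenius–Schur indicators; $d_a$ quantum dimensions; $(a,b,c)$ admissible iff $\mathrm{Hom}(a\otimes b,c)\ne0$. Trivalent vertices are normalized so $\theta(a,b,c)=\sqrt{d_ad_bd_c}$; $F^{abc}_{d;nm}$ are the (unitary) $F$-symbols: the basis vector of $\mathrm{Hom}((a\otimes b)\otimes c,d)$ with intermediate $m$ equals $\sum_nF^{abc}_{d;nm}$ times that of $\mathrm{Hom}(a\otimes(b\otimes c),d)$ with intermediate $n$. $H_\mathcal{C}$ has basis $e^{ab}_{i;cd}$ ($(a,i,b)$, $(i,d,c)$ admissible), multiplication $e^{ab}_{i;cd}e^{a'b'}_{i';c'd'}=\frac{\delta_{c,a'}\delta_{d,b'}\delta_{i,i'}}{\sqrt{d_i}}e^{ab}_{i;c'd'}$, unit $\eta=\sum_{a,b,i}\sqrt{d_i}e^{ab}_{i;ab}$ and comultiplication $\Delta(e^{ab}_{i;cd})=\sum_{j,k,p,q}\frac{\sqrt{d_jd_k}}{\sqrt{d_i}}F^{ajk}_{b;ip}F^{dkj}_{c;iq}e^{ap}_{j;cq}\otimes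 e^{pb}_{k;qd}$ (sum over $j,k$ admissible with $i$). $V_i$ is the $H_\mathcal{C}$-module with basis $v^{ab}_i$ ($(a,i,b)$ admissible) and $e^{ab}_{l;cd}\cdot v^{pq}_i=\frac{\delta_{i,l}\delta_{c,p}\delta_{d,q}}{\sqrt{d_i}}v^{ab}_i$. The tensor product of $H_\mathcal{C}$-modules is $U\otimes V=\Delta(\eta)\cdot(U\otimes_\mathbb{C}V)$ with $H_\mathcal{C}$ acting through $\Delta$. *)

(* Defs.v *)
From HB Require Import structures.
From mathcomp Require Import all_boot all_order all_algebra.
Set Implicit Arguments.
Unset Strict Implicit.
Unset Printing Implicit Defensive.
Import Order.TTheory GRing.Theory Num.Theory.
Local Open Scope ring_scope.

(* Skeletal data of a unitary, multiplicity-free fusion category all   *)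
(* of whose simples are self-dual with trivial Frobenius-Schur         *)
(* indicators, with trivalent vertices normalised so that              *)
(* theta(a,b,c) = sqrt(d_a d_b d_c) (isotopy-invariant, unoriented     *)
(* graphical calculus).                                                 *)
(*   lab          : the finite set of (isoclasses of) simple objects    *)
(*   adm a b c    : (a,b,c) admissible, i.e. Hom(a (x) b, c) <> 0       *)
(*   F a b c d n m: the F-symbol F^{abc}_{d;nm} (m intermediate of       *)
(*                  (a (x) b) (x) c, n intermediate of a (x) (b (x) c)); *)
(*                  by convention 0 on non-admissible labels.           *)

Record UFC (C : numClosedFieldType) := MkUFC {
  lab : finType;
  one : lab;
  adm : lab -> lab -> lab -> bool;
  dim : lab -> C;
  F : lab -> lab -> lab -> lab -> lab -> lab -> C;
  (* self-duality: admissibility is invariant under all permutations *)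
  adm_sym12 : forall a b c, adm a b c = adm b a c;
  adm_sym23 : forall a b c, adm a b c = adm a c b;
  adm_one : forall a b, adm one a b = (a == b);
  adm_assoc : forall a b c d,
    (\sum_(e : lab) (adm a b e && adm e c d))%N =
    (\sum_(f : lab) (adm b c f && adm a f d))%N;
  dim_pos : forall a, 0 < dim a;
  dim_one : dim one = 1;
  dim_fusion : forall a b,
    dim a * dim b = \sum_(c : lab) (if adm a b c then dim c else 0);
  F_supp : forall a b c d n m,
    ~~ [&& adm a b m, adm m c d, adm b c n & adm a n d] -> F a b c d n m = 0;
  F_unitary_rows : forall a b c d n n',
    \sum_(m : lab) F a b c d n m * (F a b c d n' m)^* =
    (if [&& n == n', adm b c n & adm a n d] then 1 else 0);
  F_unitary_cols : forall a b c d m m',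
    \sum_(n : lab) (F a b c d n m)^* * F a b c d n m' =
    (if [&& m == m', adm a b m & adm m c d] then 1 else 0);
  F_pentagon : forall a b c d e p q r s,
    F p c d e r q * F a b r e s p =
    \sum_(t : lab) F a b c q t p * F a t d e s q * F b c d s r t;
  F_unit1 : forall b c d n m,
    F one b c d n m = (if [&& n == d, m == b & adm b c d] then 1 else 0);
  F_unit2 : forall a c d n m,
    F a one c d n m = (if [&& n == c, m == a & adm a c d] then 1 else 0);
  F_unit3 : forall a b d n m,
    F a b one d n m = (if [&& n == b, m == d & adm a b d] then 1 else 0);
  (* tetrahedral symmetry of the (unitary, isotopy invariant) 6j-symbols:
     Tet = F^{abc}_{d;nm} sqrt(d_a d_b d_c d_d) is invariant under the
     rotations of the tetrahedron and complex conjugated by reflections;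
     the three transpositions below generate S_4. *)
  F_tet12 : forall a b c d n m,
    F d c b a n m * sqrtC (dim d * dim c * dim b * dim a) =
    (F a b c d n m * sqrtC (dim a * dim b * dim c * dim d))^*;
  F_tet34 : forall a b c d n m,
    F b a d c n m * sqrtC (dim b * dim a * dim d * dim c) =
    (F a b c d n m * sqrtC (dim a * dim b * dim c * dim d))^*;
  F_tet13 : forall a b c d n m,
    F n b m d a c * sqrtC (dim n * dim b * dim m * dim d) =
    (F a b c d n m * sqrtC (dim a * dim b * dim c * dim d))^*
}.

Arguments one {C} u : rename.
Arguments adm {C} u _ _ _ : rename.
Arguments dim {C} u _ : rename.
Arguments F {C} u _ _ _ _ _ _ : rename.

Section Tube.
Variables (C : numClosedFieldType) (U : UFC C).
Local Notation L := (lab U).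
Local Notation adm := (adm U).
Local Notation dim := (dim U).
Local Notation F := (F U).

Definition vec (I : finType) := {ffun I -> C}.
Definition delta (I : finType) (i : I) : vec I := [ffun w => (w == i)%:R].
Definition vscale (I : finType) (a : C) (x : vec I) : vec I := [ffun w => a * x w].
Definition vadd (I : finType) (x y : vec I) : vec I := [ffun w => x w + y w].
Definition vzero (I : finType) : vec I := [ffun => 0].
Definition vsum (J I : finType) (P : pred J) (f : J -> vec I) : vec I :=
  [ffun w => \sum_(t | P t) f t w].
Definition lin (I J : finType) (f : vec I -> vec J) :=
  forall a x y, f (vadd (vscale a x) y) = vadd (vscale a (f x)) (f y).

(* ---- the algebra H_C: basis e^{ab}_{i;cd}, index (a,b,i,c,d) ---- *)
Definition Hidx : finType := (L * L * L * L * L)%type.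
Definition Hadm (t : Hidx) : bool :=
  let: (a, b, i, c, d) := t in adm a i b && adm i d c.
Definition inH (h : vec Hidx) := forall t, ~~ Hadm t -> h t = 0.
Definition ebasis (t : Hidx) : vec Hidx := delta t.

(* unit  eta = sum_{a,b,i} sqrt(d_i) e^{ab}_{i;ab} *)
Definition eta : vec Hidx :=
  [ffun t => let: (a, b, i, c, d) := t in
     if [&& c == a, d == b & adm a i b] then sqrtC (dim i) else 0].

(* comultiplication, with values in H_C (x) H_C = vec (Hidx * Hidx)%type *)
Definition Delta_basis (t : Hidx) : vec (Hidx * Hidx)%type :=
  let: (a, b, i, c, d) := t in
  [ffun s => let: ((a1, p, j, c1, q), (p2, b2, k, q2, d2)) := s in
     if [&& a1 == a, c1 == c, p2 == p, b2 == b, q2 == q, d2 == d & adm i j k]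
     then sqrtC (dim j * dim k) / sqrtC (dim i) * F a j k b i p * F d k j c i q
     else 0].
Definition Delta (h : vec Hidx) : vec (Hidx * Hidx)%type :=
  vsum predT (fun t => vscale (h t) (Delta_basis t)).

(* ---- the modules V_i: basis v^{ab}_i, coordinates on L * L ---- *)
Definition inV (i : L) (x : vec (L * L)%type) := forall a b, ~~ adm a i b -> x (a, b) = 0.
Definition actVb (i : L) (t : Hidx) (x : vec (L * L)%type) : vec (L * L)%type :=
  let: (a, b, l, c, d) := t in
  [ffun w => if (w == (a, b)) && (l == i) then x (c, d) / sqrtC (dim i) else 0].
Definition actV (i : L) (h : vec Hidx) (x : vec (L * L)%type) : vec (L * L)%type :=
  vsum predT (fun t => vscale (h t) (actVb i t x)).

Definition ent (I : finType) (f : vec I -> vec I) (u u' : I) : C := f (delta u') u.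
Definition kron (I J : finType) (f : vec I -> vec I) (g : vec J -> vec J)
  (x : vec (I * J)%type) : vec (I * J)%type :=
  [ffun w => \sum_(w' : (I * J)%type) ent f w.1 w'.1 * ent g w.2 w'.2 * x w'].

(* V_j (x)_C V_k : coordinates ((a,p),(p',b)) for v^{ap}_j (x) v^{p'b}_k *)
Definition TIdx : finType := ((L * L) * (L * L))%type.
Definition inVC (j k : L) (x : vec TIdx) :=
  forall w, ~~ (adm w.1.1 j w.1.2 && adm w.2.1 k w.2.2) -> x w = 0.
Definition actT2 (j k : L) (g : vec (Hidx * Hidx)%type) (x : vec TIdx) : vec TIdx :=
  vsum predT (fun s => vscale (g s) (kron (actVb j s.1) (actVb k s.2) x)).
Definition actT (j k : L) (h : vec Hidx) (x : vec TIdx) : vec TIdx :=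
  actT2 j k (Delta h) x.
(* the H_C-module V_j (x) V_k = Delta(eta) . (V_j (x)_C V_k) *)
Definition inTM (j k : L) (x : vec TIdx) :=
  exists y, inVC j k y /\ x = actT j k eta y.

Definition uvec (j k i a b : L) : vec TIdx :=
  [ffun w => if [&& w.1.1 == a, w.2.2 == b & w.1.2 == w.2.1]
             then F a j k b i w.1.2 else 0].
Definition inW (j k i : L) (x : vec TIdx) :=
  exists c : L -> L -> C,
    x = vsum (fun ab : (L * L)%type => adm ab.1 i ab.2)
             (fun ab => vscale (c ab.1 ab.2) (uvec j k i ab.1 ab.2)).
Definition phi (j k i : L) (x : vec (L * L)%type) : vec TIdx :=
  vsum (fun ab : (L * L)%type => adm ab.1 i ab.2)
       (fun ab => vscale (x ab) (uvec j k i ab.1 ab.2)).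

Definition SIdx : finType := (L * (L * L))%type.
Definition inS (j k : L) (z : vec SIdx) :=
  forall i a b, ~~ (adm i j k && adm a i b) -> z (i, (a, b)) = 0.
Definition comp (z : vec SIdx) (i : L) : vec (L * L)%type := [ffun w => z (i, w)].
Definition actS (h : vec Hidx) (z : vec SIdx) : vec SIdx :=
  [ffun w => actV w.1 h (comp z w.1) w.2].

End Tube.

(* Main.v *)
Require Import Defs.
From mathcomp Require Import all_boot all_order all_algebra.
From mathcomp Require Import ring.
Import Order.TTheory GRing.Theory Num.Theory.
Set Implicit Arguments.
Unset Strict Implicit.
Unset Printing Implicit Defensive.
Local Open Scope ring_scope.

Lemma sq_ne0 (C : numClosedFieldType) (U : UFC C) (a : lab U) :
  sqrtC (Defs.dim U a) != 0.
Proof. by rewrite sqrtC_eq0 gt_eqF // dim_pos. Qed.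

Lemma dim_ge0 (C : numClosedFieldType) (U : UFC C) (a : lab U) : 0 <= Defs.dim U a.
Proof. by apply: ltW; apply: dim_pos. Qed.

Lemma Fconj (C : numClosedFieldType) (U : UFC C) (c j k d l q : lab U) :
  F U d k j c l q = (F U c j k d l q)^*.
Proof.
have := F_tet12 c j k d l q.
have -> : Defs.dim U d * Defs.dim U k * Defs.dim U j * Defs.dim U c = Defs.dim U c * Defs.dim U j * Defs.dim U k * Defs.dim U d by ring.
rewrite rmorphM /= (geC0_conj (x := sqrtC _)); last first.
  by rewrite sqrtC_ge0 !mulr_ge0 ?dim_ge0.
apply: mulIf. by rewrite sqrtC_eq0 !mulf_neq0 // gt_eqF // dim_pos.
Qed.

Lemma kronE (C : numClosedFieldType) (U : UFC C) (j k : lab U)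
  (a1 p j' c1 q p2 b2 k' q2 d2 : lab U) (x : vec C (TIdx U)) (w : TIdx U) :
  kron (actVb j (a1, p, j', c1, q)) (actVb k (p2, b2, k', q2, d2)) x w =
  if [&& w.1 == (a1, p), j' == j, w.2 == (p2, b2) & k' == k]
  then x ((c1, q), (q2, d2)) / (sqrtC (Defs.dim U j) * sqrtC (Defs.dim U k)) else 0.
Proof.
rewrite /kron ffunE (bigD1 ((c1, q), (q2, d2))) // big1.
  rewrite Monoid.mulm1 /ent /actVb /delta; cbv beta iota zeta; rewrite !ffunE !eqxx.
  case: (w.1 == _); case: (j' == j); case: (w.2 == _); case: (k' == k);
   cbv beta iota delta [andb]; rewrite ?mulr1n ?mulr0n ?mul0r ?mulr0 //; try exact: mul0r.
  by rewrite invfM; ring.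
move=> [[c q'] [q2' d]] nw'.
rewrite /ent /actVb /delta; cbv beta iota zeta; rewrite !ffunE.
case: (w.1 == _); case: (j' == j); case: (w.2 == _); case: (k' == k);
  cbv beta iota delta [andb]; rewrite ?mul0r ?mulr0 ?mul0r //; try exact: mul0r; try exact: mulr0.
rewrite [(_, _, _).1]/= [(_, _, _).2]/=.
case: eqP => [[? ?]|_]; last by rewrite mul0r !mul0r.
case: eqP => [[? ?]|_]; last by rewrite mulr0n mul0r mulr0 mul0r.
by subst; rewrite eqxx in nw'.
Qed.

Lemma vscaleE (C : numClosedFieldType) (I : finType) (a : C) (v : vec C I) w :
  vscale a v w = a * v w.
Proof. by rewrite ffunE. Qed.

Lemma vsumE (C : numClosedFieldType) (J I : finType) (P : pred J) (f : J -> vec C I) w :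
  vsum P f w = \sum_(t | P t) f t w.
Proof. by rewrite ffunE. Qed.

Lemma vaddE (C : numClosedFieldType) (I : finType) (v v' : vec C I) w :
  vadd v v' w = v w + v' w.
Proof. by rewrite ffunE. Qed.

Lemma sum_collapse (C : numClosedFieldType) (I J : finType) (f : I -> C)
  (g : J -> I) (pi : I -> J) :
  cancel g pi -> (forall s, f s != 0 -> s = g (pi s)) ->
  \sum_s f s = \sum_q f (g q).
Proof.
move=> gK Hf.
rewrite (partition_big pi predT) //; apply: eq_bigr => q _.
rewrite (bigD1 (g q)) /= ?gK ?eqxx // big1 ?addr0 // => s /andP [/eqP Hs ns].
apply/eqP; apply: contraR ns => /Hf ->; by rewrite Hs.
Qed.

Definition PsiP (C : numClosedFieldType) (U : UFC C) (j k : lab U)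
  (z : lab U -> (lab U * lab U)%type -> C) : vec C (TIdx U) :=
  [ffun w : TIdx U => if w.1.2 == w.2.1 then
     \sum_l (if adm U l j k then F U w.1.1 j k w.2.2 l w.1.2 * z l (w.1.1, w.2.2) else 0)
   else 0].

Definition coef (C : numClosedFieldType) (U : UFC C) (j k l : lab U)
  (x : vec C (TIdx U)) (c d : lab U) : C :=
  \sum_q (F U c j k d l q)^* * x ((c, q), (q, d)).

Lemma DBK (C : numClosedFieldType) (U : UFC C) (j k : lab U)
  (a b l c d w11 w12 w21 w22 : lab U) (x : vec C (TIdx U)) :
  \sum_s Delta_basis (a, b, l, c, d) s *
      kron (actVb j s.1) (actVb k s.2) x ((w11, w12), (w21, w22)) =
  if [&& w11 == a, w22 == b, w21 == w12 & adm U l j k]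
  then F U a j k b l w12 / sqrtC (Defs.dim U l) * coef j k l x c d else 0.
Proof.
rewrite (@sum_collapse C _ _ _ (fun q => ((a, w12, j, c, q), (w12, b, k, q, d)))
   (fun s => s.1.2)) //; last first.
  move=> [[[[[a1 p] j'] c1] q] [[[[p2 b2] k'] q2] d2]] /=.
  rewrite kronE /Delta_basis ffunE.
  case: ifP => [/and5P [/eqP -> /eqP -> /eqP -> /eqP -> /andP [/eqP -> /andP [/eqP -> _]]]|].
    case: ifP => [/and4P [/eqP [-> ->] /eqP -> _ /eqP ->] _ //|_].
    by rewrite mulr0 eqxx.
  by move=> _; rewrite mul0r eqxx.
under eq_bigr => q _ do rewrite kronE /Delta_basis ffunE !eqxx /=.
case: (boolP [&& w11 == a, w22 == b, w21 == w12 & adm U l j k]); last first.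
  move=> nc; rewrite big1 // => q _.
  case: ifP => Ha; last exact: mul0r.
  case: ifP => Hk; last exact: mulr0.
  exfalso; move: nc Hk; rewrite Ha !xpair_eqE !eqxx /= !andbT.
  by move=> nc /and3P [h1 h2 h3]; rewrite h1 h2 h3 in nc.
case/and4P => /eqP -> /eqP -> /eqP -> Ha.
rewrite Ha !eqxx /= /coef mulr_sumr; apply: eq_bigr => q _.
rewrite (Fconj c j k d l q) sqrtCM ?nnegrE ?dim_ge0 //.
have := sq_ne0 j; have := sq_ne0 k; have := sq_ne0 l.
move: (sqrtC (Defs.dim U j)) (sqrtC (Defs.dim U k)) (sqrtC (Defs.dim U l)) => sj sk sl Hl Hk Hj.
by field; rewrite Hl Hk Hj.
Qed.

Lemma actT_PsiP (C : numClosedFieldType) (U : UFC C) (j k : lab U)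
  (h : vec C (Hidx U)) (x : vec C (TIdx U)) :
  actT j k h x = PsiP j k (fun l ab => \sum_(cd : (lab U * lab U)%type)
     h (ab.1, ab.2, l, cd.1, cd.2) / sqrtC (Defs.dim U l) * coef j k l x cd.1 cd.2).
Proof.
apply/ffunP => -[[w11 w12] [w21 w22]].
rewrite /actT /actT2 vsumE.
transitivity (\sum_(t : Hidx U) h t * (let: (a, b, l, c, d) := t in
  if [&& w11 == a, w22 == b, w21 == w12 & adm U l j k]
  then F U a j k b l w12 / sqrtC (Defs.dim U l) * coef j k l x c d else 0)).
  under eq_bigr => s _ do rewrite vscaleE /Delta vsumE mulr_suml.
  rewrite exchange_big; apply: eq_bigr => -[[[[a b] l] c] d] _.
  rewrite -DBK mulr_sumr; apply: eq_bigr => s _.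
  by rewrite vscaleE mulrA.
rewrite (@sum_collapse C _ _ _ (fun p : (lab U * (lab U * lab U))%type =>
   (w11, w22, p.1, p.2.1, p.2.2)) (fun t => (t.1.1.2, (t.1.2, t.2)))) //; last first.
  move=> [[[[a b] l] c] d] /=.
  case: ifP => [/and4P [/eqP -> /eqP -> _ _] //|_].
  by rewrite mulr0 eqxx.
  by move=> [? [? ?]].
rewrite -(pair_bigA _ (fun l (cd : (lab U * lab U)%type) =>
  h (w11, w22, l, cd.1, cd.2) *
    (if [&& w11 == w11, w22 == w22, w21 == w12 & adm U l j k]
     then F U w11 j k w22 l w12 / sqrtC (Defs.dim U l) * coef j k l x cd.1 cd.2
     else 0))).
rewrite /PsiP ffunE /=.
case: (eqVneq w12 w21) => [e|ne]; last first.
  rewrite big1 // => l _; rewrite big1 // => cd _.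
  by rewrite !andbF mulr0.
subst w21; rewrite !eqxx /=; apply: eq_bigr => l _.
case: (adm U l j k).
  rewrite mulr_sumr; apply: eq_bigr => cd _; ring.
by rewrite big1 // => cd _; exact: mulr0.
Qed.

Lemma adm_rot (C : numClosedFieldType) (U : UFC C) (l j k : lab U) :
  adm U j k l = adm U l j k.
Proof. by rewrite -adm_sym23 adm_sym12. Qed.

Lemma coef_PsiP (C : numClosedFieldType) (U : UFC C) (j k : lab U)
  (z : lab U -> (lab U * lab U)%type -> C) (l c d : lab U) :
  coef j k l (PsiP j k z) c d = if adm U l j k && adm U c l d then z l (c, d) else 0.
Proof.
transitivity (\sum_l' (if adm U l' j k then z l' (c, d) *
   (if [&& l' == l, adm U j k l' & adm U c l' d] then 1 else 0) else 0)).
  rewrite /coef; under eq_bigr => q _ do rewrite /PsiP ffunE /= eqxx mulr_sumr.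
  rewrite exchange_big; apply: eq_bigr => l' _.
  case: (adm U l' j k).
    rewrite -F_unitary_rows mulr_sumr; apply: eq_bigr => q _; ring.
  by rewrite big1 // => q _; exact: mulr0.
rewrite (bigD1 l) //= big1 => [|l' nl]; last first.
  case: (adm U l' j k) => //; by rewrite (negbTE nl) mulr0.
rewrite addr0 (adm_rot l j k) eqxx.
case: (adm U l j k); case: (adm U c l d) => //=; by rewrite ?mulr1 ?mulr0.
Qed.

Lemma PsiP_eq (C : numClosedFieldType) (U : UFC C) (j k : lab U)
  (z1 z2 : lab U -> (lab U * lab U)%type -> C) :
  (forall l a b, adm U l j k -> z1 l (a, b) = z2 l (a, b)) -> PsiP j k z1 = PsiP j k z2.
Proof.
move=> H; apply/ffunP => w; rewrite !ffunE; case: ifP => // _.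
apply: eq_bigr => l _; case: ifP => // Hl; by rewrite H.
Qed.

Lemma eta_sum (C : numClosedFieldType) (U : UFC C) (a b l : lab U)
  (f : (lab U * lab U)%type -> C) :
  \sum_(cd : (lab U * lab U)%type) eta U (a, b, l, cd.1, cd.2) / sqrtC (Defs.dim U l) * f cd =
  if adm U a l b then f (a, b) else 0.
Proof.
rewrite (bigD1 (a, b)) //= big1 => [|[c d] /= ne]; last first.
  rewrite /eta ffunE; case: ifP => [/and3P [/eqP ec /eqP ed _]|_].
    by move: ne; rewrite ec ed eqxx.
  by rewrite !mul0r.
rewrite addr0 /eta ffunE !eqxx /=; case: (adm U a l b).
  by rewrite divff ?mul1r // sq_ne0.
by rewrite !mul0r.
Qed.

Lemma actV_sum (C : numClosedFieldType) (U : UFC C) (i : lab U)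
  (h : vec C (Hidx U)) (x : vec C (lab U * lab U)%type) (a b : lab U) :
  actV i h x (a, b) =
  \sum_(cd : (lab U * lab U)%type) h (a, b, i, cd.1, cd.2) * x cd / sqrtC (Defs.dim U i).
Proof.
rewrite /actV vsumE.
rewrite (@sum_collapse C _ _ _ (fun cd : (lab U * lab U)%type => (a, b, i, cd.1, cd.2))
   (fun t => (t.1.2, t.2))) //; last first.
  - move=> [[[[a' b'] l] c] d] /=; rewrite vscaleE ffunE.
    case: ifP => [/andP [/eqP [-> ->] /eqP ->] //|_]; by rewrite mulr0 eqxx.
  - by move=> [? ?].
apply: eq_bigr => -[c d] _; rewrite vscaleE ffunE !eqxx /=.
by rewrite mulrA.
Qed.

Lemma inTM_PsiP (C : numClosedFieldType) (U : UFC C) (j k : lab U)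
  (z : lab U -> (lab U * lab U)%type -> C) :
  (forall l a b, ~~ (adm U l j k && adm U a l b) -> z l (a, b) = 0) ->
  inTM j k (PsiP j k z).
Proof.
move=> Hz; exists (PsiP j k z); split.
  move=> [[w11 w12] [w21 w22]] /= Hw; rewrite ffunE /=.
  case: eqP => // e; subst w21; rewrite big1 // => l _.
  case: ifP => // _; rewrite F_supp ?mul0r //.
  by apply/negP => /and4P [h1 h2 _ _]; move: Hw; rewrite h1 h2.
rewrite actT_PsiP; apply: PsiP_eq => l a b Hl.
under eq_bigr => cd _ do rewrite coef_PsiP.
rewrite eta_sum /= Hl /=.
case: (boolP (adm U a l b)) => Hab //; by rewrite Hz // Hl (negbTE Hab).
Qed.

Definition famW (C : numClosedFieldType) (U : UFC C) (i : lab U) (c : lab U -> lab U -> C) :=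
  fun l (ab : (lab U * lab U)%type) =>
    if (l == i) && adm U ab.1 i ab.2 then c ab.1 ab.2 else 0.

Lemma W_PsiP (C : numClosedFieldType) (U : UFC C) (j k i : lab U) (c : lab U -> lab U -> C) :
  adm U i j k ->
  vsum (fun ab : (lab U * lab U)%type => adm U ab.1 i ab.2)
       (fun ab => vscale (c ab.1 ab.2) (uvec j k i ab.1 ab.2)) = PsiP j k (famW i c).
Proof.
move=> Hi; apply/ffunP => -[[w11 w12] [w21 w22]]; rewrite vsumE ffunE /=.
have -> : \sum_l (if adm U l j k then F U w11 j k w22 l w12 * famW i c l (w11, w22) else 0)
   = F U w11 j k w22 i w12 * famW i c i (w11, w22).
  rewrite (bigD1 i) //= Hi big1 ?addr0 // => l /negbTE nl.
  by case: ifP => //; rewrite /famW nl /= mulr0.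
rewrite /famW eqxx /=.
case: (boolP (adm U w11 i w22)) => Hab.
  rewrite (bigD1 (w11, w22)) //= big1 ?addr0; last first.
    move=> [a b] /andP [_ ne].
    rewrite vscaleE ffunE /=; case: ifP => [/and3P [/eqP ea /eqP eb _]|_].
      by move: ne; rewrite ea eb eqxx.
    by rewrite mulr0.
  rewrite vscaleE ffunE /= !eqxx /=.
  by case: ifP => _; rewrite ?mulr0 // mulrC.
rewrite big1; last first.
  move=> [a b] /= Hab'.
  rewrite vscaleE ffunE /=; case: ifP => [/and3P [/eqP ea /eqP eb _]|_].
    by move: Hab'; rewrite -ea -eb (negbTE Hab).
  by rewrite mulr0.
by rewrite mulr0 if_same.
Qed.

Lemma phi_PsiP (C : numClosedFieldType) (U : UFC C) (j k i : lab U) (x : vec C (lab U * lab U)%type) :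
  adm U i j k -> phi j k i x = PsiP j k (famW i (fun a b => x (a, b))).
Proof.
move=> Hi; rewrite -W_PsiP //; apply/ffunP => w; rewrite !vsumE.
by apply: eq_bigr => -[a b].
Qed.

Lemma inH_zero (C : numClosedFieldType) (U : UFC C) (h : vec C (Hidx U)) (a b i c d : lab U) :
  inH h -> ~~ (adm U a i b && adm U c i d) -> h (a, b, i, c, d) = 0.
Proof.
move=> Hh H; apply: (Hh (a, b, i, c, d)); rewrite /Hadm.
by move: H; rewrite (adm_sym12 c i d) (adm_sym23 i c d).
Qed.

Theorem mainTheorem9 (C : numClosedFieldType) (U : UFC C) (j k : lab U) :
  (forall i : lab U, adm U i j k ->
     (forall x : vec C (TIdx U), inW j k i x -> inTM j k x) /\
     (forall (h : vec C (Hidx U)) (x : vec C (TIdx U)),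
        inH h -> inW j k i x -> inW j k i (actT j k h x)) /\
     (forall x : vec C (lab U * lab U)%type, inV i x -> inW j k i (phi j k i x)) /\
     (forall x : vec C (TIdx U), inW j k i x ->
        exists y : vec C (lab U * lab U)%type, inV i y /\ phi j k i y = x) /\
     (forall x y : vec C (lab U * lab U)%type,
        inV i x -> inV i y -> phi j k i x = phi j k i y -> x = y) /\
     (forall (h : vec C (Hidx U)) (x : vec C (lab U * lab U)%type),
        inH h -> inV i x -> phi j k i (actV i h x) = actT j k h (phi j k i x))) /\
  (exists Psi : vec C (SIdx U) -> vec C (TIdx U),
     lin Psi /\
     (forall z, inS j k z -> inTM j k (Psi z)) /\
     (forall x, inTM j k x -> exists z, inS j k z /\ Psi z = x) /\
     (forall z z', inS j k z -> inS j k z' -> Psi z = Psi z' -> z = z') /\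
     (forall (h : vec C (Hidx U)) z, inH h -> inS j k z ->
        Psi (actS h z) = actT j k h (Psi z))).
Proof.
split.
  move=> i Hi.
  have famW_supp : forall c l a b, ~~ (adm U l j k && adm U a l b) -> famW i c l (a, b) = 0.
    move=> c l a b H; rewrite /famW /=; case: eqP => //= el; subst l.
    by rewrite Hi /= in H; rewrite (negbTE H).
  split.
    move=> x [c ->]; rewrite W_PsiP //. apply: inTM_PsiP. exact: famW_supp.
  split.
    move=> h x Hh [c ->]; rewrite W_PsiP // actT_PsiP.
    pose c' := (fun a b => \sum_(cd : (lab U * lab U)%type)
       h (a, b, i, cd.1, cd.2) / sqrtC (Defs.dim U i) * famW i c i cd).
    exists c'.
    rewrite W_PsiP //; apply: PsiP_eq => l a b Hl.
    under eq_bigr => cd _ do rewrite coef_PsiP.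
    rewrite /famW /=; case: (eqVneq l i) => [el|nl]; last first.
      by rewrite /= big1 // => cd _; rewrite if_same mulr0.
    subst l; rewrite Hl /=.
    case: (boolP (adm U a i b)) => Hab.
      apply: eq_bigr => cd _; rewrite /famW eqxx /=; by case: (adm U cd.1 i cd.2).
    rewrite big1 // => cd _; rewrite inH_zero ?mul0r //.
    by rewrite (negbTE Hab).
  split.
    move=> x _; exists (fun a b => x (a, b)); apply/ffunP => w; rewrite !vsumE.
    by apply: eq_bigr => -[a b].
  split.
    move=> x [c ->]; exists [ffun ab : (lab U * lab U)%type => if adm U ab.1 i ab.2 then c ab.1 ab.2 else 0].
    split.
      by move=> a b H; rewrite ffunE /= (negbTE H).
    apply/ffunP => w; rewrite !vsumE; apply: eq_bigr => -[a b] /= H.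
    by rewrite !vscaleE ffunE /= H.
  split.
    move=> x y Hx Hy E; apply/ffunP => -[a b].
    have := congr1 (fun v => coef j k i v a b) E; rewrite /= !phi_PsiP // !coef_PsiP Hi /=.
    rewrite /famW eqxx /=.
    by case: (boolP (adm U a i b)) => H //; rewrite Hx ?Hy.
  move=> h x Hh Hx; rewrite !phi_PsiP // actT_PsiP; apply: PsiP_eq => l a b Hl.
  under eq_bigr => cd _ do rewrite coef_PsiP.
  rewrite /famW /=; case: (eqVneq l i) => [el|nl]; last first.
    by rewrite /= big1 // => cd _; rewrite if_same mulr0.
  subst l; rewrite Hl /= actV_sum.
  case: (boolP (adm U a i b)) => Hab.
    apply: eq_bigr => -[c d] _ /=.
    case: (boolP (adm U c i d)) => Hcd /=; first by rewrite mulrAC.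
    by rewrite (Hx c d Hcd) !mulr0 mul0r.
  rewrite big1 // => cd _; rewrite inH_zero ?mul0r //.
  by rewrite (negbTE Hab).
exists (fun z => PsiP j k (fun l ab => z (l, ab))).
split.
  move=> a x y; apply/ffunP => w; rewrite vaddE vscaleE !ffunE.
  case: ifP => _; last by rewrite mulr0 addr0.
  rewrite mulr_sumr -big_split /=; apply: eq_bigr => l _.
  case: ifP => _; last by rewrite mulr0 addr0.
  rewrite vaddE vscaleE; ring.
split.
  move=> z Hz; apply: inTM_PsiP => l a b H; exact: Hz.
split.
  move=> x [y [_ ->]]; rewrite actT_PsiP.
  exists [ffun p : SIdx U => if adm U p.1 j k && adm U p.2.1 p.1 p.2.2
                           then coef j k p.1 y p.2.1 p.2.2 else 0].
  split.
    by move=> l a b H; rewrite ffunE /= (negbTE H).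
  apply: PsiP_eq => l a b Hl; rewrite ffunE /= Hl /= eta_sum.
  by case: ifP.
split.
  move=> z z' Hz Hz' E; apply/ffunP => -[l [a b]].
  have := congr1 (fun v => coef j k l v a b) E; rewrite /= !coef_PsiP.
  by case: (boolP (adm U l j k && adm U a l b)) => H //; rewrite Hz ?Hz'.
move=> h z Hh Hz; rewrite actT_PsiP; apply: PsiP_eq => l a b Hl.
rewrite ffunE /= actV_sum; apply: eq_bigr => -[c d] _ /=.
rewrite coef_PsiP ffunE /= Hl /=.
case: (boolP (adm U c l d)) => H; first by rewrite mulrAC.
rewrite (Hz l c d); last by rewrite Hl (negbTE H).
by rewrite !mulr0 mul0r.
Qed.
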